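(* Let $\tau\ge1$ be an integer. A hypergraph $H=(\mathcal{V},\mathcal{E})$ is inherently $\tau$-connected if and only if for every partition $\mathscr{P}$ of $\mathcal{V}$ into nonempty disjoint sets $\mathcal{V}_1,\dots,\mathcal{V}_{|\mathscr{P}|}$, $$\sum_{e\in\mathcal{E}}\big(r(e;\mathscr{P})-1\big)\ge\tau(|\mathscr{P}|-1),$$ where $r(e;\mathscr{P})$ is the number of parts of $\mathscr{P}$ that the hyperedge $e$ intersects.
   Context: Hypergraphs may have repeated hyperedges; each hyperedge is a nonempty subset of $\mathcal{V}$. A multigraph $G=(\mathcal{V},\mathcal{E}_M)$ is induced by the hypergraph $H=(\mathcal{V},\mathcal{E})$ if its edge multiset decomposes as a disjoint union of edge sets of simple graphs $G_e=(e,E_e)$, $e\in\mathcal{E}$, where each $G_e$ is a connected simple graph on the vertex set $e$. $H$ is inherently $\tau$-connected if every multigraph induced by $H$ contains at least $\tau$ edge-disjoint spanning trees. *)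

(* Defs.v *)
From mathcomp Require Import all_boot.
Set Implicit Arguments. Unset Strict Implicit. Unset Printing Implicit Defensive.

(* A hypergraph on the finite vertex type V is a sequence E : seq {set V} of
   hyperedges (repetitions allowed); each hyperedge must be nonempty. *)
Definition hyperedges_nonempty (V : finType) (E : seq {set V}) : bool :=
  all (fun e => e != set0) E.

(* A multigraph on V is a sequence of edges (repetitions = parallel edges);
   each edge is a vertex set (a 2-element set for genuine edges). Edges are
   identified by their index 'I_(size M). *)

Definition madj (V : finType) (M : seq {set V}) (S : {set 'I_(size M)})
  : rel V :=
  fun x y => [exists i in S, nth set0 M i == [set x; y]].

Definition mconnected (V : finType) (M : seq {set V}) (S : {set 'I_(size M)})
  : Prop := forall x y : V, connect (madj S) x y.

(* acyclic: no edge of S lies on a cycle, i.e. removing any edge {x,y} of S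
   disconnects x from y in what remains *)
Definition macyclic (V : finType) (M : seq {set V}) (S : {set 'I_(size M)})
  : Prop :=
  forall i, i \in S -> forall x y : V, x != y -> nth set0 M i = [set x; y] ->
    ~~ connect (madj (S :\ i)) x y.

Definition spanning_tree (V : finType) (M : seq {set V}) (S : {set 'I_(size M)})
  : Prop := mconnected S /\ macyclic S.

Definition has_edge_disjoint_spanning_trees (V : finType) (M : seq {set V})
  (tau : nat) : Prop :=
  exists T : 'I_tau -> {set 'I_(size M)},
    (forall k, spanning_tree (T k)) /\
    (forall k l, k != l -> [disjoint T k & T l]).

Definition connected_simple_graph_on (V : finType) (e : {set V})
  (F : {set {set V}}) : Prop :=
  (forall f, f \in F -> #|f| = 2 /\ f \subset e) /\
  (forall x y, x \in e -> y \in e -> connect (fun u v => [set u; v] \in F) x y).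

(* The multigraph induced by choosing, for the i-th hyperedge E_i, the simple
   graph with edge set Fs_i: the disjoint union of the edge sets. *)
Definition induced_multigraph (V : finType) (Fs : seq {set {set V}})
  : seq {set V} := flatten (map (fun F : {set {set V}} => enum F) Fs).

Definition is_induced_choice (V : finType) (E : seq {set V})
  (Fs : seq {set {set V}}) : Prop :=
  size Fs = size E /\
  forall i, i < size E -> connected_simple_graph_on (nth set0 E i) (nth set0 Fs i).

Definition inherently_connected (V : finType) (E : seq {set V}) (tau : nat)
  : Prop :=
  forall Fs : seq {set {set V}}, is_induced_choice E Fs ->
    has_edge_disjoint_spanning_trees (induced_multigraph Fs) tau.

Definition rparts (V : finType) (e : {set V}) (P : {set {set V}}) : nat :=
  #|[set B in P | ~~ [disjoint B & e]]|.

(* Main.v *)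
Require Import Defs.
From mathcomp Require Import all_boot zify.
From Stdlib Require ClassicalEpsilon Classical_Prop.
Set Implicit Arguments. Unset Strict Implicit. Unset Printing Implicit Defensive.


Section Gen.
Variables (V I : finType) (ed : I -> {set V}).

Definition adj (S : {set I}) : rel V :=
  fun x y => [exists i in S, ed i == [set x; y]].
Definition cn S := connect (adj S).

Lemma adj_sym (S : {set I}) : symmetric (adj S).
Proof. by move=> x y; rewrite /adj setUC. Qed.

Lemma cn_sym (S : {set I}) : connect_sym (adj S).
Proof. exact/sym_connect_sym/adj_sym. Qed.

Lemma cnC (S : {set I}) x y : cn S x y = cn S y x.
Proof. exact: cn_sym. Qed.

Lemma cn_refl (S : {set I}) x : cn S x x.
Proof. exact: connect0. Qed.

Lemma cn_same (S : {set I}) x y : cn S x y -> cn S x =1 cn S y.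
Proof. by move=> H z; rewrite /cn (same_connect (cn_sym S) H). Qed.

Lemma cn_trans (S : {set I}) x y z : cn S x y -> cn S y z -> cn S x z.
Proof. exact: connect_trans. Qed.

Lemma adj_mono (S T : {set I}) : S \subset T -> forall x y, adj S x y -> adj T x y.
Proof.
move=> ST x y /existsP[i /andP[iS e]]; apply/existsP; exists i.
by rewrite (subsetP ST) .
Qed.

Lemma cn_mono (S T : {set I}) : S \subset T -> forall x y, cn S x y -> cn T x y.
Proof.
move=> ST; apply: connect_sub => x y H; apply: connect1; exact: adj_mono H.
Qed.

Lemma connect_ind_step (e : rel V) (P : pred V) x :
  P x -> (forall y z, P y -> e y z -> P z) -> forall y, connect e x y -> P y.
Proof.
move=> Px step y /connectP[p pth ->]; elim: p x Px pth => [|z p IH] x Px //=.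
by case/andP=> exz pz; apply: (IH z) => //; exact: step exz.
Qed.

Lemma set2_eqE (a b x y : V) : [set x; y] = [set a; b] ->
  (x == a) && (y == b) || (x == b) && (y == a).
Proof.
move=> E.
have xin : x \in [set a; b] by rewrite -E set21.
have yin : y \in [set a; b] by rewrite -E set22.
have ain : a \in [set x; y] by rewrite E set21.
have bin : b \in [set x; y] by rewrite E set22.
case/set2P: xin => ?; case/set2P: yin => ?; subst x y; rewrite ?eqxx ?orbT //.
  by move: bin; rewrite !inE orbb => /eqP ->; rewrite eqxx.
by move: ain; rewrite !inE orbb => /eqP ->; rewrite eqxx.
Qed.

Lemma cn_add (S : {set I}) i a b : ed i = [set a; b] -> forall u v,
  cn (i |: S) u v = [|| cn S u v, cn S u a && cn S b v | cn S u b && cn S a v].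
Proof.
move=> ei u v; apply/idP/idP.
- move: v; apply: connect_ind_step; first by rewrite /cn connect0.
  move=> y z Hy /existsP[j /andP[]]; rewrite in_setU1 => /orP[/eqP->|jS] /eqP ej.
    rewrite ej in ei; case/orP: (set2_eqE ei) => /andP[/eqP ? /eqP ?]; subst y z.
    + case/or3P: Hy => [H|/andP[H1 H2]|/andP[H1 H2]].
      * by rewrite H /cn connect0 orbT.
      * by rewrite (cn_trans H1 _) // cnC.
      * by rewrite H1.
    + case/or3P: Hy => [H|/andP[H1 H2]|/andP[H1 H2]].
      * by rewrite H /cn connect0 /= !orbT.
      * by rewrite H1.
      * by rewrite (cn_trans H1 _) // cnC.
  have Hyz : cn S y z by apply: connect1; apply/existsP; exists j; rewrite jS ej eqxx.
  case/or3P: Hy => [H|/andP[H1 H2]|/andP[H1 H2]].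
  + by rewrite (cn_trans H Hyz).
  + by rewrite H1 (cn_trans H2 Hyz) orbT.
  + by rewrite H1 (cn_trans H2 Hyz) !orbT.
- have sub := cn_mono (subsetUr [set i] S).
  have eab : adj (i |: S) a b by apply/existsP; exists i; rewrite setU11 ei eqxx.
  case/or3P => [/sub //|/andP[/sub H1 /sub H2]|/andP[/sub H1 /sub H2]].
    by apply: cn_trans H1 (cn_trans (connect1 eab) H2).
  by apply: cn_trans H1 (cn_trans _ H2); rewrite cnC; apply: connect1.
Qed.


Definition cl (S : {set I}) x := [set y | cn S x y].
Definition ncomp (S : {set I}) := #|[set cl S x | x in [set: V]]|.

Lemma cl_eqP (S : {set I}) x y : reflect (cl S x = cl S y) (cn S x y).
Proof.
apply: (iffP idP) => [H|H].
  by apply/setP => z; rewrite !inE /cn (same_connect (cn_sym S) H).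
have : y \in cl S y by rewrite inE /cn connect0.
by rewrite -H inE.
Qed.

Lemma in_cl (S : {set I}) x y : (y \in cl S x) = cn S x y.
Proof. by rewrite inE. Qed.

Lemma cn_add_conn (S : {set I}) i a b : ed i = [set a; b] -> cn S a b ->
  forall u v, cn (i |: S) u v = cn S u v.
Proof.
move=> ei ab u v; rewrite (cn_add S ei).
case: (boolP (cn S u v)) => //= uv; apply/negbTE; apply/negP.
case/orP=> /andP[H1 H2]; case/negP: uv.
  by apply: cn_trans H1 (cn_trans ab H2).
by apply: cn_trans H1 (cn_trans _ H2); rewrite cnC.
Qed.

Lemma comp_add_conn (S : {set I}) i a b : ed i = [set a; b] -> cn S a b ->
  ncomp (i |: S) = ncomp S.
Proof.
move=> ei ab; rewrite /ncomp.
have -> // : [set cl (i |: S) x | x in [set: V]] = [set cl S x | x in [set: V]].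
by apply: eq_imset => x; apply/setP => y; rewrite !inE (cn_add_conn ei ab).
Qed.

Lemma comp_add_disc (S : {set I}) i a b : ed i = [set a; b] -> ~~ cn S a b ->
  ncomp S = (ncomp (i |: S)).+1.
Proof.
move=> ei nab.
pose X := cl S a; pose Y := cl S b.
pose f := fun K : {set V} => if (a \in K) || (b \in K) then X :|: Y else K.
have clf x : cl (i |: S) x = f (cl S x).
  apply/setP => y; rewrite /f in_cl (cn_add S ei) !in_cl.
  case: (boolP (cn S x a)) => xa /=.
    have nxb : ~~ cn S x b by apply: contra nab => H; apply: cn_trans H; rewrite cnC.
    rewrite (negbTE nxb) /= in_setU !in_cl.
    by rewrite orbF /cn (same_connect (cn_sym S) xa).
  case: (boolP (cn S x b)) => xb /=; last by rewrite orbF in_cl.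
  by rewrite in_setU !in_cl /cn (same_connect (cn_sym S) xb) orbC.
have Xin : X \in [set cl S x | x in [set: V]] by apply: imset_f.
have Yin : Y \in [set cl S x | x in [set: V]] by apply: imset_f.
have XY : X != Y by apply: contra nab => /eqP H; apply/cl_eqP.
have e1 : [set cl (i |: S) x | x in [set: V]] = f @: [set cl S x | x in [set: V]].
  by rewrite -imset_comp; apply: eq_imset => x; rewrite /= clf.
have fY : f Y = f X by rewrite /f !inE /cn !connect0 !orbT.
have e2 : f @: [set cl S x | x in [set: V]] = f @: ([set cl S x | x in [set: V]] :\ Y).
  apply/setP => K; apply/imsetP/imsetP => [[L LC ->]|[L]]; last first.
    by rewrite inE => /andP[_ LC] ->; exists L.
  case: (L =P Y) => [->|/eqP LY]; last by exists L; rewrite // in_setD1 LY LC.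
  by exists X; [rewrite in_setD1 XY Xin | exact fY].
have clK (K : {set V}) z : K \in [set cl S x | x in [set: V]] -> z \in K -> K = cl S z.
  by case/imsetP=> w _ -> zK; apply/cl_eqP; rewrite -in_cl.
have inj : {in [set cl S x | x in [set: V]] :\ Y &, injective f}.
  have key K : K \in [set cl S x | x in [set: V]] :\ Y -> (a \in K) || (b \in K) -> K = X.
    rewrite in_setD1 => /andP[KY KC] /orP[aK|bK]; first exact: clK aK.
    by case/negP: KY; apply/eqP; apply: clK bK.
  move=> K L KC LC; rewrite /f.
  case: (boolP ((a \in K) || (b \in K))) => HK; case: (boolP ((a \in L) || (b \in L))) => HL.
  - by rewrite (key K KC HK) (key L LC HL).
  - by move=> E; case/negP: HL; rewrite -E !in_setU /X in_cl /cn connect0.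
  - by move=> E; case/negP: HK; rewrite E !in_setU /X in_cl /cn connect0.
  - by [].
rewrite /ncomp e1 e2 (card_in_imset inj) (cardsD1 Y) Yin.
by [].
Qed.


Lemma cn0 x y : cn set0 x y = (x == y).
Proof.
apply/idP/eqP => [|->]; last by rewrite /cn connect0.
case/connectP=> [[|z p]] //= /andP[/existsP[j]]; by rewrite inE.
Qed.

Lemma comp0 : ncomp set0 = #|V|.
Proof.
rewrite /ncomp -cardsT.
have -> : [set cl set0 x | x in [set: V]] = [set [set x] | x in [set: V]].
  by apply: eq_imset => x; apply/setP => y; rewrite !inE cn0 eq_sym.
by rewrite card_imset //; apply: set1_inj.
Qed.

Lemma comp_add_le (S : {set I}) i : #|ed i| = 2 -> ncomp S <= (ncomp (i |: S)).+1.
Proof.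
move/eqP/cards2P=> [a [b [_ ei]]].
case: (boolP (cn S a b)) => H.
  by rewrite (comp_add_conn ei H).
by rewrite (comp_add_disc ei H).
Qed.

Lemma comp_sub (S T : {set I}) : S \subset T -> {in T :\: S, forall i, #|ed i| = 2} ->
  ncomp S <= ncomp T + #|T :\: S|.
Proof.
move Hn: #|T :\: S| => n; elim: n S Hn => [|n IH] S Hn ST H2.
  have -> : S = T.
    apply/eqP; rewrite eqEsubset ST /=; apply/subsetP => x xT.
    by apply/negPn/negP => xS; move/eqP: Hn; apply/negP; rewrite -lt0n; apply/card_gt0P; exists x; rewrite inE xS.
  by rewrite addn0.
have [i iTS] : exists i, i \in T :\: S by apply/card_gt0P; rewrite Hn.
move: (iTS); rewrite inE => /andP[iS iT].
have Hn' : #|T :\: (i |: S)| = n.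
  have -> : T :\: (i |: S) = (T :\: S) :\ i.
    by apply/setP => z; rewrite !inE negb_or andbA.
  by move: Hn; rewrite (cardsD1 i (T :\: S)) iTS add1n => -[].
have ST' : i |: S \subset T by rewrite subUset sub1set iT ST.
have H2' : {in T :\: (i |: S), forall i, #|ed i| = 2}.
  by move=> j; rewrite !inE => /andP[/norP[_ jS] jT]; apply: H2; rewrite inE jS jT.
have := IH _ Hn' ST' H2'.
have := comp_add_le S (H2 _ iTS).
lia.
Qed.

Definition forest (S : {set I}) := forall i, i \in S -> forall x y, x != y ->
  ed i = [set x; y] -> ~~ cn (S :\ i) x y.

Lemma forest_sub (S T : {set I}) : S \subset T -> forest T -> forest S.
Proof.
move=> ST fT i iS x y xy ei; apply: contra (fT i (subsetP ST i iS) x y xy ei).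
by apply: cn_mono; apply: setSD.
Qed.

Lemma forest_count (S : {set I}) : forest S -> {in S, forall i, #|ed i| = 2} ->
  ncomp S + #|S| = #|V|.
Proof.
move Hn: #|S| => n; elim: n S Hn => [|n IH] S Hn fS H2.
  by move/eqP: Hn; rewrite cards_eq0 => /eqP ->; rewrite comp0 addn0.
have [i iS] : exists i, i \in S by apply/card_gt0P; rewrite Hn.
have Hn' : #|S :\ i| = n by move: Hn; rewrite (cardsD1 i) iS add1n => -[].
have fS' : forest (S :\ i) by apply: forest_sub fS; apply: subsetDl.
have H2' : {in S :\ i, forall i, #|ed i| = 2} by move=> j; rewrite inE => /andP[_ /H2].
have := IH _ Hn' fS' H2'.
move/eqP/cards2P: (H2 i iS) => [a [b [ab ei]]].
have nab := fS i iS a b ab ei.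
have := comp_add_disc ei nab.
rewrite setD1K //; lia.
Qed.

Lemma forest_add (S : {set I}) i a b : forest S -> i \notin S -> ed i = [set a; b] ->
  ~~ cn S a b -> forest (i |: S).
Proof.
move=> fS iS ei nab j; rewrite in_setU1 => /orP[/eqP->|jS] x y xy ej.
  rewrite setU1K //; rewrite ej in ei; case/orP: (set2_eqE ei) => /andP[/eqP-> /eqP->] //.
  by rewrite cnC.
have ij : i != j by apply: contra iS => /eqP->.
have -> : (i |: S) :\ j = i |: (S :\ j).
  by apply/setP => z; rewrite !inE; case: (z =P i) => // ->; rewrite ij.
rewrite (cn_add _ ei); apply/negP => /or3P[H|/andP[H1 H2]|/andP[H1 H2]].
- by move/negP: (fS j jS x y xy ej).
- have sub := cn_mono (subD1set S j).
  have exy : cn S x y by apply: connect1; apply/existsP; exists j; rewrite jS ej eqxx.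
  case/negP: nab; apply: (cn_trans (y:=x)); first by rewrite cnC; exact: sub.
  by apply: (cn_trans exy); rewrite cnC; exact: sub.
- have sub := cn_mono (subD1set S j).
  have exy : cn S x y by apply: connect1; apply/existsP; exists j; rewrite jS ej eqxx.
  case/negP: nab; apply: (cn_trans (sub _ _ H2)); apply: (cn_trans (y:=x)); first by rewrite cnC.
  exact: sub.
Qed.

Definition sep (S : {set I}) a b := [set j in S | ~~ cn (S :\ j) a b].

Lemma path_lemma (S : {set I}) a b : forest S -> {in S, forall i, #|ed i| = 2} ->
  cn S a b -> cn (sep S a b) a b.
Proof.
move Hn: #|S| => n; elim: n S Hn => [|n IH] S Hn fS H2 Hab.
  move/eqP: Hn; rewrite cards_eq0 => /eqP S0; subst S.
  by move: Hab; rewrite cn0 => /eqP->; rewrite /cn connect0.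
case: (boolP (S \subset sep S a b)) => [sS|].
  by apply: cn_mono sS _ _ Hab.
case/subsetPn => j jS; rewrite inE jS /= => /negbNE Hj.
have Hn' : #|S :\ j| = n by move: Hn; rewrite (cardsD1 j) jS add1n => -[].
have fS' : forest (S :\ j) by apply: forest_sub fS; apply: subsetDl.
have H2' : {in S :\ j, forall i, #|ed i| = 2} by move=> k; rewrite inE => /andP[_ /H2].
apply: cn_mono (IH _ Hn' fS' H2' Hj).
apply/subsetP => k; rewrite !inE => /andP[/andP[kj kS] nk]; rewrite kS /=.
apply/negP => Hk.
move/eqP/cards2P: (H2 k kS) => [u [v [uv ek]]].
have T0 : (S :\ j) :\ k = (S :\ k) :\ j by rewrite setDDl setUC -setDDl.
have E1 : S :\ j = k |: ((S :\ j) :\ k) by rewrite setD1K // !inE kj kS.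
move: Hj; rewrite E1 (cn_add _ ek) (negbTE nk) /= T0 => Hj.
have sub : (S :\ k) :\ j \subset S :\ k by apply: subsetDl.
have Huv : cn (S :\ k) u v.
  case/orP: Hj => /andP[H1 H3].
    apply: (cn_trans (y:=a)); first by rewrite cnC; exact: cn_mono sub _ _ H1.
    apply: cn_trans Hk _; rewrite cnC; exact: cn_mono sub _ _ H3.
  apply: (cn_trans (y:=b)); first exact: cn_mono sub _ _ H3.
  apply: (cn_trans (y:=a)); first by rewrite cnC.
  exact: cn_mono sub _ _ H1.
by move/negP: (fS k kS u v uv ek).
Qed.

Definition restr (S : {set I}) (K : {set V}) := [set i in S | ed i \subset K].

Lemma cn_restr (S : {set I}) (K : {set V}) a b :
  (forall i u v, i \in S -> ed i = [set u; v] -> u \in K -> v \in K) ->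
  a \in K -> cn S a b -> cn (restr S K) a b.
Proof.
move=> cl aK Hab.
suff : (b \in K) && cn (restr S K) a b by case/andP.
move: b Hab; apply: (@connect_ind_step (adj S) (fun y => (y \in K) && cn (restr S K) a y)).
  by rewrite aK /cn connect0.
move=> y z /andP[yK Hy] /existsP[i /andP[iS /eqP ei]].
have zK := cl i y z iS ei yK.
rewrite zK; apply: cn_trans Hy _; apply: connect1; apply/existsP; exists i.
by rewrite inE iS ei eqxx subUset !sub1set yK zK.
Qed.


Definition hcl (S : {set I}) (B : {set V}) := [set y | [exists x in B, cn S x y]].

Lemma hcl_cl (S : {set I}) (B : {set V}) x : x \in B -> {in B, forall u, cn S x u} ->
  hcl S B = cl S x.
Proof.
move=> xB HB; apply/setP => y; rewrite !inE; apply/existsP/idP => [[u /andP[uB uy]]|xy].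
  exact: cn_trans (HB u uB) uy.
by exists x; rewrite xB.
Qed.

Lemma comp_lower (S : {set I}) (P : {set {set V}}) :
  {in P, forall B, B != set0} ->
  (forall B B' x, B \in P -> B' \in P -> x \in B -> x \in B' -> B = B') ->
  (forall B i u v, B \in P -> i \in S -> ed i = [set u; v] -> u \in B -> v \in B) ->
  #|P| <= ncomp S.
Proof.
move=> ne dis clo.
have clB B x y : B \in P -> x \in B -> cn S x y -> y \in B.
  move=> BP xB; move: y; apply: (@connect_ind_step (adj S) (mem B)) => // y z yB.
  by case/existsP=> i /andP[iS /eqP ei]; apply: (clo B i y z).
case: (set_0Vmem P) => [->|[B0 B0P]]; first by rewrite cards0.
have [x0 _] : exists x0, x0 \in B0 by apply/set0Pn; apply: ne.
pose pk (B : {set V}) := odflt x0 [pick x in B].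
have pkB B : B \in P -> pk B \in B.
  move=> BP; rewrite /pk; case: pickP => [x xB //|H].
  by case/set0Pn: (ne B BP) => x; rewrite H.
pose g (B : {set V}) := cl S (pk B).
have inj : {in P &, injective g}.
  move=> B B' BP B'P /cl_eqP H.
  exact: (dis B B' (pk B') BP B'P (clB B _ _ BP (pkB B BP) H) (pkB B' B'P)).
rewrite -(card_in_imset inj) /ncomp; apply: subset_leq_card.
by apply/subsetP => K /imsetP[B BP ->]; apply: imset_f.
Qed.

Lemma comp_upper (S : {set I}) (Q : {set {set V}}) :
  (forall x, exists2 K, K \in Q & x \in K) ->
  (forall K u v, K \in Q -> u \in K -> v \in K -> cn S u v) ->
  ncomp S <= #|Q|.
Proof.
move=> cov con; apply: (leq_trans _ (leq_imset_card (hcl S) Q)).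
apply: subset_leq_card; apply/subsetP => C /imsetP[x _ ->].
have [K KQ xK] := cov x; apply/imsetP; exists K => //.
by rewrite (hcl_cl xK) // => u uK; apply: con KQ xK uK.
Qed.

Lemma comp_conn (S : {set I}) : ncomp S <= 1 -> forall x y, cn S x y.
Proof.
move=> /card_le1_eqP H x y; apply/cl_eqP; apply: H; apply: imset_f; exact: in_setT.
Qed.

Lemma comp_ge1 (S : {set I}) (x0 : V) : 0 < ncomp S.
Proof. by apply/card_gt0P; exists (cl S x0); apply: imset_f. Qed.

End Gen.


Definition pb (P : Prop) : bool :=
  if ClassicalEpsilon.excluded_middle_informative P then true else false.
Lemma pbP (P : Prop) : reflect P (pb P).
Proof. by rewrite /pb; case: ClassicalEpsilon.excluded_middle_informative => H; constructor. Qed.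

Lemma sum_bool (T : finType) (b : pred T) : \sum_(i : T) (b i : nat) = #|[set i | b i]|.
Proof.
rewrite -sum1_card [RHS]big_mkcond /=; apply: eq_bigr => i _; rewrite inE; by case: (b i).
Qed.

Section NWT.
Variables (V I : finType) (ed : I -> {set V}) (k : nat).
Hypothesis H2 : forall i, #|ed i| = 2.

Local Notation adj := (adj ed).
Local Notation cn := (cn ed).
Local Notation forest := (forest ed).
Local Notation ncomp := (ncomp ed).
Local Notation restr := (restr ed).
Local Notation cl := (cl ed).

Definition tup := {ffun 'I_k -> {set I}}.
Definition valid (T : tup) := (forall j, forest (T j)) /\
  (forall j l, j != l -> [disjoint T j & T l]).
Definition sz (T : tup) := \sum_j #|T j|.
Definition inT (T : tup) i := [exists j, i \in T j].
Definition upd (T : tup) j (S : {set I}) : tup := [ffun l => if l == j then S else T l].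

Lemma sz_upd T j S : sz (upd T j S) + #|T j| = sz T + #|S|.
Proof.
rewrite /sz (bigD1 j) //= [in RHS](bigD1 j) //= ffunE eqxx.
have -> : \sum_(i < k | i != j) #|upd T j S i| = \sum_(i < k | i != j) #|T i|.
  by apply: eq_bigr => i ij; rewrite ffunE (negbTE ij).
by rewrite -addnA addnC [X in X + _ = _]addnC.
Qed.

Lemma sz_le T : sz T <= k * #|I|.
Proof.
rewrite /sz; apply: (@leq_trans (\sum_(j < k) #|I|)).
  by apply: leq_sum => j _; apply: max_card.
by rewrite sum_nat_const card_ord.
Qed.

Definition maxv (T : tup) := valid T /\ forall T', valid T' -> sz T' <= sz T.

Lemma valid0 : valid [ffun _ => set0].
Proof.
split=> [j i|j l _]; first by rewrite ffunE inE.
by rewrite !ffunE -setI_eq0 setI0.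
Qed.

Lemma ex_max : exists T, maxv T.
Proof.
suff H : forall m T, valid T -> k * #|I| - sz T <= m -> exists T, maxv T.
  exact: (H _ _ valid0 (leqnn _)).
elim=> [|m IH] T vT Hm.
  exists T; split=> // T' _; have := sz_le T'; lia.
case: (Classical_Prop.classic (exists T', valid T' /\ sz T < sz T')) => [[T' [vT' lt]]|nH].
  apply: (IH T' vT'); have := sz_le T'; lia.
exists T; split=> // T' vT'; rewrite leqNgt; apply/negP => lt; apply: nH; by exists T'.
Qed.

Definition step (T T' : tup) := exists j e e', T' = upd T j (e |: (T j :\ e')) /\
  valid T' /\ ~~ inT T e /\ e' \in T j.

Inductive rtc : tup -> tup -> Prop :=
| rtc0 A : rtc A A
| rtcS A A1 B : step A A1 -> rtc A1 B -> rtc A B.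

Lemma rtc_snoc A B C : rtc A B -> step B C -> rtc A C.
Proof.
elim=> [A0 H|A0 A1 B0 s _ IH H]; first by apply: rtcS H (rtc0 _).
exact: rtcS s (IH H).
Qed.

Lemma step_maxv A B : maxv A -> step A B -> maxv B.
Proof.
move=> [vA mA] [j [e [e' [-> [vB [ne e'A]]]]]]; split=> // T' vT'.
have := sz_upd A j (e |: (A j :\ e')).
have eA : e \notin A j by apply: contra ne => H; apply/existsP; exists j.
have eA' : e \notin A j :\ e' by rewrite in_setD1 negb_and eA orbT.
rewrite cardsU1 eA' (cardsD1 e' (A j)) e'A.
have := mA _ vT'; lia.
Qed.

Variable T0 : tup.
Hypothesis mT0 : maxv T0.

Definition reach T := rtc T0 T.

Lemma rtc_maxv A B : rtc A B -> maxv A -> maxv B.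
Proof. elim=> // A0 A1 B0 s _ IH mA; apply: IH; exact: step_maxv s. Qed.

Lemma reach_maxv T : reach T -> maxv T.
Proof. by move=> r; apply: rtc_maxv r mT0. Qed.

Definition E0s := [set e | pb (exists T, reach T /\ ~~ inT T e)].

Lemma notinT T j e : ~~ inT T e -> e \notin T j.
Proof. by apply: contra => H; apply/existsP; exists j. Qed.

Lemma valid_upd T j S : valid T -> forest S -> (forall l, l != j -> [disjoint S & T l]) ->
  valid (upd T j S).
Proof.
move=> [fT dT] fS dS; split=> [l|l l' ll']; rewrite !ffunE.
  by case: (l == j).
case: (boolP (l == j)) => [/eqP lj|lj]; case: (boolP (l' == j)) => [/eqP l'j|l'j].
- by move: ll'; rewrite lj l'j eqxx.
- by apply: dS.
- by rewrite disjoint_sym; apply: dS.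
- by apply: dT.
Qed.

Lemma disj_sub (S S' R : {set I}) : S \subset S' -> [disjoint S' & R] -> [disjoint S & R].
Proof. by move=> sub; apply: disjointWl. Qed.

Lemma disjointP (A B : {set I}) : reflect (forall x, x \in A -> x \notin B) [disjoint A & B].
Proof. by rewrite disjoint_subset; apply: (iffP subsetP) => H x /H; rewrite inE. Qed.

Lemma disjN (A B : {set I}) x : [disjoint A & B] -> x \in A -> x \notin B.
Proof. by move/disjointP; apply. Qed.

Lemma disjU1 (e : I) (S R : {set I}) : e \notin R -> [disjoint S & R] -> [disjoint e |: S & R].
Proof.
move=> eR dSR; apply/disjointP => z; rewrite in_setU1 => /orP[/eqP->//|zS].
exact: (disjN dSR zS).
Qed.

Section Core.
Variables (K : {set V}).
Hypothesis Kcl : forall i u v, i \in E0s -> ed i = [set u; v] -> u \in K -> v \in K.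

Lemma core A j e a b : reach A -> ~~ inT A e -> ed e = [set a; b] -> a \in K ->
  cn (restr (A j) K) a b.
Proof.
move=> rA ne ee aK.
have [vA mA] := reach_maxv rA.
have [fA dA] := vA.
have eAj := notinT j ne.
have ndisj l : l != j -> e \notin A l by move=> _; apply: notinT.
case: (a =P b) => [<-|/eqP ab]; first exact: cn_refl.
have cab : cn (A j) a b.
  apply/negPn/negP => nab.
  have vA' : valid (upd A j (e |: A j)).
    apply: valid_upd => //; first by apply: forest_add ee nab.
    move=> l lj; apply: disjU1; first exact: notinT.
    by apply: dA; rewrite eq_sym.
  have := mA _ vA'; have := sz_upd A j (e |: A j); rewrite cardsU1 eAj; lia.
have fAj := fA j.
have H2A : {in A j, forall i, #|ed i| = 2} by move=> i _.
have sab := path_lemma fAj H2A cab.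
have sE0 : sep ed (A j) a b \subset E0s.
  apply/subsetP => i; rewrite inE => /andP[iA ni].
  have ei : e != i by apply: contra eAj => /eqP->.
  pose A' := upd A j (e |: (A j :\ i)).
  have vA' : valid A'.
    apply: valid_upd => //.
      by apply: forest_add ee ni; [apply: forest_sub fAj; apply: subD1set | rewrite in_setD1 negb_and eAj orbT].
    move=> l lj; apply: disjU1; first exact: notinT.
    by apply: disj_sub (subD1set _ _) _; apply: dA; rewrite eq_sym.
  have sA : step A A' by exists j, e, i.
  rewrite inE; apply/pbP; exists A'; split; first exact: rtc_snoc sA.
  apply/existsP => -[l]; rewrite ffunE.
  case: (boolP (l == j)) => [_|lj].
    by rewrite in_setU1 in_setD1 eqxx eq_sym (negbTE ei).
  have jl : j != l by rewrite eq_sym.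
  by move: (disjN (dA j l jl) iA) => /negbTE ->.
have Hr := cn_restr (S := sep ed (A j) a b) (K := K)
   (fun i u v iS eu => Kcl (subsetP sE0 i iS) eu) aK sab.
apply: cn_mono Hr; apply/subsetP => i; rewrite !inE => /andP[/andP[iA _] ->].
by rewrite iA.
Qed.

Lemma back_step A A1 j u v : reach A -> step A A1 ->
  cn (restr (A1 j) K) u v -> cn (restr (A j) K) u v.
Proof.
move=> rA [l [e [e' [-> [_ [ne _]]]]]]; apply: connect_sub => x y /existsP[i /andP[]].
rewrite inE ffunE => /andP[iA1 iK] /eqP ei.
case: (boolP (i \in A j)) => iA.
  by apply: connect1; apply/existsP; exists i; rewrite inE iA iK ei eqxx.
case: (boolP (j == l)) => [/eqP jl|jl]; last by move: iA1; rewrite (negbTE jl) (negbTE iA).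
subst l; move: iA1; rewrite eqxx in_setU1 in_setD1 (negbTE iA) andbF orbF => /eqP ie.
subst i; have xK : x \in K by move: iK; rewrite ei subUset sub1set => /andP[].
exact: (core j rA ne ei xK).
Qed.

Lemma back A B : rtc A B -> reach A -> forall j u v,
  cn (restr (B j) K) u v -> cn (restr (A j) K) u v.
Proof.
elim=> // A0 A1 B0 s _ IH rA j u v H.
have rA1 := rtc_snoc rA s.
exact: (back_step rA s (IH rA1 j u v H)).
Qed.

Lemma lem43 j x y : cn E0s x y -> x \in K -> cn (restr (T0 j) K) x y.
Proof.
move=> Hxy xK.
suff : (y \in K) && cn (restr (T0 j) K) x y by case/andP.
move: y Hxy; apply: (connect_ind_step (P := fun y => (y \in K) && cn (restr (T0 j) K) x y)).
  by rewrite xK cn_refl.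
move=> y z /andP[yK Hy] /existsP[i /andP[iE /eqP ei]].
have zK := Kcl iE ei yK.
rewrite zK; apply: cn_trans Hy _.
move: (iE); rewrite inE => /pbP[A [rA nA]].
have := core j rA nA ei yK.
exact: back rA (rtc0 T0) j y z.
Qed.
End Core.

End NWT.


Lemma disjP (T : finType) (A B : {set T}) :
  reflect (forall x, x \in A -> x \notin B) [disjoint A & B].
Proof. by rewrite disjoint_subset; apply: (iffP subsetP) => H x /H; rewrite inE. Qed.

Lemma meet2 (T : finType) (B : {set T}) a b :
  ~~ [disjoint B & [set a; b]] = (a \in B) || (b \in B).
Proof.
case: (boolP [disjoint B & [set a; b]]) => H /=.
  apply/esym/negbTE/norP; split; apply/negP => xB; move/disjP: H => /(_ _ xB);
  by rewrite !inE eqxx ?orbT.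
rewrite -setI_eq0 in H; case/set0Pn: H => x; rewrite !inE => /andP[xB /orP[/eqP xa|/eqP xb]].
  by subst; rewrite xB.
by subst; rewrite xB orbT.
Qed.

Definition inb (T : finType) (P : {set {set T}}) (s : {set T}) := [exists B in P, s \subset B].

Lemma rp2 (T : finType) (P : {set {set T}}) (s : {set T}) :
  partition P [set: T] -> #|s| = 2 -> rparts s P - 1 = ~~ inb P s.
Proof.
move=> /and3P[/eqP cov triv _] /eqP/cards2P[a [b [ab ->]]].
have cv x : x \in cover P by rewrite cov inE.
rewrite /rparts.
have -> : [set B in P | ~~ [disjoint B & [set a; b]]] = [set pblock P a; pblock P b].
  apply/setP => B; rewrite !inE meet2; apply/andP/orP => [[BP /orP[aB|bB]]|[/eqP->|/eqP->]].
  - by left; rewrite (def_pblock triv BP aB).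
  - by right; rewrite (def_pblock triv BP bB).
  - by rewrite pblock_mem ?cv // mem_pblock cv.
  - by rewrite pblock_mem ?cv // mem_pblock cv orbT.
rewrite cards2.
have -> : inb P [set a; b] = (pblock P a == pblock P b).
  apply/existsP/eqP => [[B /andP[BP]]|E].
    by rewrite subUset !sub1set => /andP[aB bB]; rewrite (def_pblock triv BP aB) (def_pblock triv BP bB).
  exists (pblock P a); rewrite pblock_mem ?cv //= subUset !sub1set mem_pblock cv E mem_pblock cv.
  done.
by case: (pblock P a == pblock P b).
Qed.

Lemma sum_in_bool (T : finType) (A : {set T}) (b : pred T) :
  \sum_(i in A) (b i : nat) = #|A :&: [set i | b i]|.
Proof.
rewrite -sum1_card big_mkcond [RHS]big_mkcond; apply: eq_bigr => i _; rewrite !inE.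
by case: (i \in A); case: (b i).
Qed.

Lemma sum_ge (k : nat) (f : 'I_k -> nat) j0 : (forall j, 0 < f j) ->
  f j0 + k.-1 <= \sum_j f j.
Proof.
move=> H; rewrite (bigD1 j0) //= leq_add2l.
apply: (@leq_trans (\sum_(j < k | j != j0) 1)).
  by rewrite sum1_card cardC1 card_ord.
by apply: leq_sum => j _; apply: H.
Qed.

Theorem nwt (V I : finType) (ed : I -> {set V}) (k : nat) :
  (forall i, #|ed i| = 2) ->
  (forall P : {set {set V}}, partition P [set: V] ->
     k * (#|P| - 1) <= \sum_(i : I) (rparts (ed i) P - 1)) ->
  exists T : 'I_k -> {set I},
    (forall j, (forall x y, cn ed (T j) x y) /\ forest ed (T j)) /\
    (forall j l, j != l -> [disjoint T j & T l]).
Proof.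
move=> H2 Hcond.
case: (boolP (#|V| == 0)) => [V0|Vn0].
  have nV : V -> False by move=> x; move: (card0_eq (eqP V0) x); rewrite !inE.
  exists (fun _ => set0); split=> [j|j l _]; last by rewrite -setI_eq0 setI0.
  by split=> [x|i]; [case: (nV x) | rewrite inE].
have [x0 _] : exists x0 : V, x0 \in [set: V] by apply/card_gt0P; rewrite cardsT lt0n.
have [T0 mT0] := ex_max ed k.
have [[fT0 dT0] _] := mT0.
pose E0 := E0s ed T0.
pose R := cn ed E0.
pose P := equivalence_partition R [set: V].
have eqR : {in [set: V] & &, equivalence_rel R}.
  move=> x y z _ _ _; split; first by rewrite /R cn_refl.
  by move=> Hxy; rewrite /R (cn_same Hxy).
have partP : partition P [set: V] := equivalence_partitionP eqR.
have pbl x y : (y \in pblock P x) = R x y.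
  by apply: (pblock_equivalence_partition eqR); rewrite inE.
move: (partP) => /and3P[/eqP cov triv _].
have cv x : x \in cover P by rewrite cov inE.
have inB B u v : B \in P -> u \in B -> v \in B -> R u v.
  by move=> BP uB vB; rewrite -pbl (def_pblock triv BP uB).
have Kcl u : forall i y z, i \in E0 -> ed i = [set y; z] -> y \in pblock P u -> z \in pblock P u.
  move=> i y z iE ei; rewrite !pbl => Huy; apply: cn_trans Huy _; apply: connect1.
  by apply/existsP; exists i; rewrite iE ei eqxx.
pose cr := [set i | ~~ inb P (ed i)].
pose Tin j := T0 j :\: cr.
have conn j B u v : B \in P -> u \in B -> v \in B -> cn ed (Tin j) u v.
  move=> BP uB vB.
  have Ruv := inB B u v BP uB vB.
  have uK : u \in pblock P u by rewrite mem_pblock cv.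
  have := lem43 H2 mT0 (Kcl u) j Ruv uK.
  apply: cn_mono; apply/subsetP => i; rewrite !inE => /andP[iT iK].
  rewrite iT andbT negbK; apply/existsP; exists (pblock P u).
  by rewrite pblock_mem ?cv.
have compin j : ncomp ed (Tin j) <= #|P|.
  apply: comp_upper => [x|K u v KP uK vK]; last exact: conn KP uK vK.
  by exists (pblock P x); rewrite ?pblock_mem ?mem_pblock ?cv.
have ineq j : #|T0 j :&: cr| + ncomp ed (T0 j) <= #|P|.
  have c1 := forest_count (fT0 j) (fun i _ => H2 i).
  have fin : forest ed (Tin j) by apply: forest_sub (fT0 j); apply: subsetDl.
  have c2 := forest_count fin (fun i _ => H2 i).
  have c3 := cardsID cr (T0 j).
  have := compin j; rewrite /Tin in c2 *; lia.
have Hc := Hcond P partP.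
rewrite (eq_bigr (fun i => (~~ inb P (ed i) : nat))) in Hc; last first.
  by move=> i _; apply: rp2 partP (H2 i).
rewrite sum_bool -/cr in Hc.
have inTcr i : i \in cr -> exists j, i \in T0 j.
  move=> icr; case: (boolP (inT T0 i)) => [/existsP[j iT]|ni]; first by exists j.
  exfalso.
  have iE : i \in E0 by rewrite inE; apply/pbP; exists T0; split; [exact: rtc0 | exact: ni].
  move/eqP/cards2P: (H2 i) => [a [b [_ ei]]].
  have Rab : R a b by apply: connect1; apply/existsP; exists i; rewrite iE ei eqxx.
  move: icr; rewrite inE => /negP; apply; apply/existsP; exists (pblock P a).
  by rewrite pblock_mem ?cv //= ei subUset !sub1set !pbl Rab /R cn_refl.
have crsub : #|cr| <= \sum_j #|T0 j :&: cr|.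
  rewrite -sum1_card.
  apply: (@leq_trans (\sum_(i in cr) \sum_j (i \in T0 j : nat))).
    apply: leq_sum => i icr; have [j iT] := inTcr i icr.
    by rewrite (bigD1 j) //= iT.
  rewrite exchange_big /=; apply: leq_sum => j _.
  rewrite sum_in_bool; apply: subset_leq_card; apply/subsetP => i; rewrite !inE.
  by case/andP=> -> ->.
have sumineq : \sum_j #|T0 j :&: cr| + \sum_j ncomp ed (T0 j) <= k * #|P|.
  rewrite -big_split /=.
  apply: (@leq_trans (\sum_(j < k) #|P|)); first by apply: leq_sum => j _; apply: ineq.
  by rewrite sum_nat_const card_ord.
have P1 : 0 < #|P| by apply/card_gt0P; exists (pblock P x0); rewrite pblock_mem ?cv.
have S2le : \sum_j ncomp ed (T0 j) <= k.
  move: Hc crsub sumineq; rewrite mulnBr muln1.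
  have : k <= k * #|P| by rewrite leq_pmulr.
  move: (k * #|P|) => kp; lia.
have c1 j0 : ncomp ed (T0 j0) <= 1.
  have := sum_ge j0 (fun j => comp_ge1 ed (T0 j) x0).
  have : 0 < k by apply: (leq_ltn_trans (leq0n j0)); apply: ltn_ord.
  move: S2le; lia.
exists (fun j => T0 j); split=> // j; split; last exact: fT0.
exact: comp_conn (c1 j).
Qed.


Lemma sumM (V : finType) (Fs : seq {set {set V}}) (g : {set V} -> nat) :
  \sum_(i < size (induced_multigraph Fs)) g (nth set0 (induced_multigraph Fs) i) =
  \sum_(F <- Fs) \sum_(f in F) g f.
Proof.
rewrite -(big_mkord xpredT (fun i => g (nth set0 (induced_multigraph Fs) i))).
rewrite -(big_nth set0 xpredT g) /induced_multigraph big_flatten big_map /=.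
by apply: eq_bigr => F _; rewrite big_enum.
Qed.

Lemma sum_pair (A B : Type) (a0 : A) (b0 : B) (E : seq A) (Fs : seq B) (h : A -> nat) (h' : B -> nat) :
  size Fs = size E -> (forall i, i < size E -> h (nth a0 E i) <= h' (nth b0 Fs i)) ->
  \sum_(e <- E) h e <= \sum_(F <- Fs) h' F.
Proof.
elim: E Fs => [|e E IH] [|F Fs] //= sz H; rewrite ?big_nil ?big_cons //.
apply: leq_add; first exact: (H 0).
apply: IH; first by case: sz.
by move=> i lt; apply: (H i.+1).
Qed.

Lemma sum_pair' (A B : Type) (a0 : A) (b0 : B) (E : seq A) (Fs : seq B) (h : A -> nat) (h' : B -> nat) :
  size Fs = size E -> (forall i, i < size E -> h' (nth b0 Fs i) <= h (nth a0 E i)) ->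
  \sum_(F <- Fs) h' F <= \sum_(e <- E) h e.
Proof.
elim: E Fs => [|e E IH] [|F Fs] //= sz H; rewrite ?big_nil ?big_cons //.
apply: leq_add; first exact: (H 0).
apply: IH; first by case: sz.
by move=> i lt; apply: (H i.+1).
Qed.

Lemma M2 (V : finType) (E : seq {set V}) (Fs : seq {set {set V}}) :
  is_induced_choice E Fs -> forall i : 'I_(size (induced_multigraph Fs)),
  #|nth set0 (induced_multigraph Fs) i| = 2.
Proof.
move=> [sz H] i.
have : nth set0 (induced_multigraph Fs) i \in induced_multigraph Fs by apply: mem_nth.
case/flattenP => s /mapP[F FFs ->]; rewrite mem_enum => fF.
have [j jlt eF] : exists2 j, j < size Fs & F = nth set0 Fs j.
  by exists (index F Fs); [rewrite index_mem | rewrite nth_index].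
rewrite sz in jlt; have [H1 _] := H j jlt.
by rewrite -eF in H1; have [] := H1 _ fF.
Qed.

Lemma adj_id (V : finType) (F : {set {set V}}) x y :
  adj (fun f : {set V} => f) F x y = ([set x; y] \in F).
Proof.
apply/existsP/idP => [[i /andP[iF /eqP <-]] //|H].
by exists [set x; y]; rewrite H eqxx.
Qed.

Lemma crossB (V : finType) (P : {set {set V}}) (e : {set V}) (F : {set {set V}}) :
  partition P [set: V] -> connected_simple_graph_on e F ->
  rparts e P - 1 <= \sum_(f in F) (rparts f P - 1).
Proof.
move=> partP [Fe Fc].
move: (partP) => /and3P[/eqP cov triv P0].
have cv x : x \in cover P by rewrite cov inE.
pose ed := fun f : {set V} => f.
have H2 : {in F, forall f, #|ed f| = 2} by move=> f /Fe[].
rewrite (eq_bigr (fun f => (~~ inb P f : nat))); last by move=> f /H2; apply: rp2.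
rewrite sum_in_bool.
pose cr := [set f | ~~ inb P f].
pose Fin := F :\: cr.
have cnF u v : u \in e -> v \in e -> cn ed F u v.
  move=> ue ve; have := Fc u v ue ve.
  by apply: connect_sub => x y H; apply: connect1; rewrite adj_id.
pose Q := e |: [set [set v] | v in ~: e].
have cF : ncomp ed F <= #|Q|.
  apply: comp_upper => [x|K u v].
    case: (boolP (x \in e)) => xe; first by exists e; rewrite ?setU11.
    by exists [set x]; rewrite ?set11 // setU1r //; apply: imset_f; rewrite inE.
  rewrite in_setU1 => /orP[/eqP->|/imsetP[w _ ->]]; first exact: cnF.
  by rewrite !inE => /eqP-> /eqP->; rewrite cn_refl.
have cQ : #|Q| <= 1 + #|~: e|.
  by rewrite cardsU1; apply: leq_add; [case: (e \notin _) | apply: leq_imset_card].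
pose Pm := [set B in P | ~~ [disjoint B & e]].
pose Pe := [set B :&: e | B in Pm] :|: [set [set v] | v in ~: e].
have Bne B : B \in Pm -> B :&: e != set0 by rewrite inE setI_eq0 => /andP[].
have cFin : #|Pe| <= ncomp ed Fin.
  apply: comp_lower.
  - move=> X; rewrite /Pe in_setU => /orP[/imsetP[B BP ->]|/imsetP[v _ ->]]; first exact: Bne.
    by apply/set0Pn; exists v; rewrite set11.
  - move=> X X' x; rewrite /Pe !in_setU => /orP[/imsetP[B BP ->]|/imsetP[v ve ->]] /orP[/imsetP[B' B'P ->]|/imsetP[v' v'e ->]].
    + rewrite !inE => /andP[xB _] /andP[xB' _].
      move: BP B'P; rewrite !inE => /andP[BP _] /andP[B'P _].
      by rewrite -(def_pblock triv BP xB) -(def_pblock triv B'P xB').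
    + by rewrite !inE => /andP[_ xe] /eqP xv; move: v'e; rewrite inE -xv xe.
    + by rewrite !inE => /eqP xv /andP[_ xe]; move: ve; rewrite inE -xv xe.
    + by rewrite !inE => /eqP-> /eqP->.
  - move=> X i u v XP; rewrite !inE => /andP[icr iF] ei uX.
    have ie : i \subset e by have [] := Fe i iF.
    have ue : u \in e by apply: (subsetP ie); rewrite /ed in ei; rewrite ei set21.
    have ve : v \in e by apply: (subsetP ie); rewrite /ed in ei; rewrite ei set22.
    move: XP uX; rewrite /Pe in_setU => /orP[/imsetP[B BP ->]|/imsetP[w we ->]]; last first.
      by rewrite inE => /eqP uw; move: we; rewrite in_setC -uw ue.
    rewrite inE => /andP[uB _]; rewrite inE ve andbT.
    move: icr; rewrite negbK => /existsP[B' /andP[B'P iB']].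
    move: BP; rewrite inE => /andP[BP _].
    rewrite /ed in ei; rewrite ei subUset !sub1set in iB'; case/andP: iB' => uB' vB'.
    by rewrite -(def_pblock triv BP uB) (def_pblock triv B'P uB').
have cPe : #|Pe| = #|Pm| + #|~: e|.
  rewrite cardsU.
  have -> : [set B :&: e | B in Pm] :&: [set [set v] | v in ~: e] = set0.
    apply/setP => X; rewrite !inE; apply/negP => /andP[/imsetP[B BP ->] /imsetP[v ve E]].
    have : v \in B :&: e by rewrite E set11.
    by rewrite inE => /andP[_]; move: ve; rewrite inE => /negbTE ->.
  rewrite cards0 subn0 card_imset; last by apply: set1_inj.
  rewrite card_in_imset //.
  move=> B B' BP B'P E; case/set0Pn: (Bne B BP) => x xBe.
  have xB'e : x \in B' :&: e by rewrite -E.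
  move: xBe xB'e BP B'P; rewrite !inE => /andP[xB _] /andP[xB' _] /andP[BP _] /andP[B'P _].
  by rewrite -(def_pblock triv BP xB) -(def_pblock triv B'P xB').
have cs := comp_sub (subsetDl F cr) (fun i iF => H2 i (subsetP (subsetDl _ _) _ iF)).
have e1 : F :\: (F :\: cr) = F :&: cr by rewrite setDDr setDv set0U.
rewrite e1 in cs.
rewrite /rparts -/Pm -/cr.
have := leq_trans cFin (leq_trans cs (leq_add (leq_trans cF cQ) (leqnn #|F :&: cr|))).
rewrite cPe. move: (#|Pm|) (#|F :&: cr|) (#|~: e|) => a b c; lia.
Qed.

Lemma crossC (V I : finType) (ed : I -> {set V}) (k : nat) (P : {set {set V}})
  (T : 'I_k -> {set I}) :
  partition P [set: V] -> (forall i, #|ed i| = 2) ->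
  (forall j x y, cn ed (T j) x y) -> (forall j l, j != l -> [disjoint T j & T l]) ->
  k * (#|P| - 1) <= \sum_(i : I) (rparts (ed i) P - 1).
Proof.
move=> partP H2 conT dT.
move: (partP) => /and3P[/eqP cov triv P0].
have cv x : x \in cover P by rewrite cov inE.
rewrite (eq_bigr (fun i => (~~ inb P (ed i) : nat))); last by move=> i _; apply: rp2.
rewrite sum_bool.
set cr := [set i | ~~ inb P (ed i)].
have each j : #|P| <= 1 + #|T j :&: cr|.
  have cl : #|P| <= ncomp ed (T j :\: cr).
    apply: comp_lower.
    - by move=> B BP; apply/eqP => B0; move: P0; rewrite -B0 BP.
    - move=> B B' x BP B'P xB xB'.
      by rewrite -(def_pblock triv BP xB) -(def_pblock triv B'P xB').
    - move=> B i u v BP; rewrite !inE => /andP[icr _] ei uB.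
      move: icr; rewrite negbK => /existsP[B' /andP[B'P iB']].
      rewrite ei subUset !sub1set in iB'; case/andP: iB' => uB' vB'.
      by rewrite -(def_pblock triv BP uB) (def_pblock triv B'P uB').
  have cu : ncomp ed (T j) <= 1.
    apply: (@leq_trans #|[set [set: V]]|); last by rewrite cards1.
    apply: comp_upper => [x|K u v]; first by exists [set: V]; rewrite ?set11 ?inE.
    by move=> _ _ _; apply: conT.
  have cs := comp_sub (subsetDl (T j) cr) (fun i _ => H2 i).
  have e1 : T j :\: (T j :\: cr) = T j :&: cr by rewrite setDDr setDv set0U.
  rewrite e1 in cs.
  move: cl cu cs; move: (#|P|) (ncomp ed (T j)) (ncomp ed (T j :\: cr)) (#|T j :&: cr|).
  move=> a b c d; lia.
have sumle : \sum_(j < k) #|T j :&: cr| <= #|cr|.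
  have -> : \sum_(j < k) #|T j :&: cr| = \sum_(i in cr) \sum_(j < k) (i \in T j : nat).
    rewrite exchange_big /=; apply: eq_bigr => j _; rewrite sum_in_bool.
    by apply: eq_card => i; rewrite !inE andbC.
  rewrite -sum1_card; apply: leq_sum => i _.
  case: (boolP [exists j, i \in T j]) => [/existsP[j0 ij0]|nj].
    rewrite (bigD1 j0) //= ij0 big1 // => j jj0.
    have : j0 != j by rewrite eq_sym.
    by move/dT => d; move: (disjN d ij0) => /negbTE ->.
  rewrite big1 // => j _; apply/eqP; rewrite eqb0; apply: contra nj => H.
  by apply/existsP; exists j.
apply: leq_trans sumle.
rewrite -[k in k * _]card_ord -sum_nat_const; apply: leq_sum => j _.
by have := each j; lia.
Qed.

Section FeSec.
Variables (V : finType) (P : {set {set V}}) (e : {set V}) (c : V).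

Definition repB (B : {set V}) := odflt c [pick y in B :&: e].
Definition Pm := [set B in P | ~~ [disjoint B & e]].
Definition Fe1 := [set f | [exists x, [exists y,
   [&& x \in e, y \in e, x != y, pblock P x == pblock P y & f == [set x; y]]]]].
Definition Fe2 := [set [set repB B; c] | B in Pm & repB B != c].
Definition Fec := Fe1 :|: Fe2.

Hypothesis partP : partition P [set: V].
Hypothesis ce : c \in e.

Lemma repP B : B \in Pm -> repB B \in B :&: e.
Proof.
rewrite inE -setI_eq0 => /andP[_ ne]; rewrite /repB; case: pickP => [y //|H].
by case/set0Pn: ne => y; rewrite H.
Qed.

Lemma rep_e B : repB B \in e.
Proof. by rewrite /repB; case: pickP => [y|//]; rewrite inE => /andP[]. Qed.

Lemma Fec_ok : connected_simple_graph_on e Fec /\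
  \sum_(f in Fec) (rparts f P - 1) <= rparts e P - 1.
Proof.
move: (partP) => /and3P[/eqP cov triv P0].
have cv x : x \in cover P by rewrite cov inE.
have pbm x : x \in e -> pblock P x \in Pm.
  move=> xe; rewrite inE pblock_mem ?cv //=; rewrite -setI_eq0; apply/set0Pn; exists x.
  by rewrite inE mem_pblock cv xe.
have F2 f : f \in Fec -> #|f| = 2 /\ f \subset e.
  rewrite in_setU => /orP[|/imsetP[B]]; last first.
    by rewrite inE => /andP[_ rc] ->; rewrite cards2 rc subUset !sub1set rep_e ce.
  rewrite inE => /existsP[x /existsP[y /and5P[xe ye xy _ /eqP->]]].
  by rewrite cards2 xy subUset !sub1set xe ye.
split.
  split=> //.
  pose r := fun u v => [set u; v] \in Fec.
  have rsym : connect_sym r by apply: sym_connect_sym => u v; rewrite /r setUC.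
  have toc x : x \in e -> connect r x c.
    move=> xe; have Bm := pbm x xe; have := repP Bm; rewrite inE => /andP[rB re].
    apply: (@connect_trans _ _ (repB (pblock P x))).
      case: (x =P repB (pblock P x)) => [<-|/eqP xr]; first exact: connect0.
      apply: connect1; rewrite /r in_setU; apply/orP; left; rewrite inE.
      apply/existsP; exists x; apply/existsP; exists (repB (pblock P x)).
      by rewrite xe re xr /= (same_pblock triv rB) eqxx eqxx.
    case: (repB (pblock P x) =P c) => [->|/eqP rc]; first exact: connect0.
    apply: connect1; rewrite /r in_setU; apply/orP; right.
    by apply/imsetP; exists (pblock P x); rewrite // inE Bm rc.
  move=> x y xe ye; apply: connect_trans (toc x xe) _.
  by rewrite rsym; apply: toc.
rewrite (eq_bigr (fun f => (~~ inb P f : nat))); last by move=> f /F2[H _]; apply: rp2.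
rewrite sum_in_bool.
have cm : pblock P c \in Pm := pbm c ce.
apply: (@leq_trans #|[set [set repB B; c] | B in Pm :\ pblock P c]|); last first.
  apply: leq_trans (leq_imset_card _ _) _.
  have -> : rparts e P = #|Pm| by [].
  by rewrite (cardsD1 (pblock P c) Pm) cm add1n subn1.
apply: subset_leq_card; apply/subsetP => f; rewrite !inE => /andP[].
case/orP=> [/existsP[x /existsP[y /and5P[xe ye xy /eqP pxy /eqP->]]]|/imsetP[B]].
  case/negP; apply/existsP; exists (pblock P x); rewrite pblock_mem ?cv //=.
  by rewrite subUset !sub1set mem_pblock cv pxy mem_pblock cv.
rewrite inE => /andP[Bm rc] -> nb; apply/imsetP; exists B => //.
rewrite in_setD1 Bm andbT; apply/eqP => Bc; case/negP: nb.
apply/existsP; exists B; move: (Bm); rewrite inE => /andP[BP _]; rewrite BP /=.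
have := repP Bm; rewrite inE => /andP[rB _].
by rewrite subUset !sub1set rB Bc mem_pblock cv.
Qed.
End FeSec.

Definition Fe (V : finType) (P : {set {set V}}) (e : {set V}) : {set {set V}} :=
  if [pick c in e] is Some c then Fec P e c else set0.

Lemma Fe_ok (V : finType) (P : {set {set V}}) (e : {set V}) :
  partition P [set: V] -> connected_simple_graph_on e (Fe P e) /\
  \sum_(f in Fe P e) (rparts f P - 1) <= rparts e P - 1.
Proof.
move=> partP; rewrite /Fe; case: pickP => [c ce|e0]; first exact: Fec_ok.
split; last by rewrite big_set0.
by split=> [f|x y]; rewrite ?inE // e0.
Qed.


Theorem theorem9 (tau : nat) (V : finType) (E : seq {set V}) :
  1 <= tau -> hyperedges_nonempty E ->
  inherently_connected E tau <->
  (forall P : {set {set V}}, partition P [set: V] ->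
     \sum_(e <- E) (rparts e P - 1) >= tau * (#|P| - 1)).
Proof.
move=> _ _; split.
- move=> IC P partP.
  pose Fs := map (Fe P) E.
  have ind : is_induced_choice E Fs.
    split; first by rewrite size_map.
    move=> i lt; rewrite (nth_map set0) //; exact: (Fe_ok _ partP).1.
  have [T [spT dT]] := IC Fs ind.
  have := crossC (ed := fun i : 'I_(size (induced_multigraph Fs)) => nth set0 (induced_multigraph Fs) i) partP (M2 ind)
    (fun j => (spT j).1) dT.
  rewrite /= (sumM Fs (fun f => rparts f P - 1)) => H; apply: leq_trans H _.
  apply: (sum_pair' (a0 := set0) (b0 := set0)); first by rewrite size_map.
  move=> i lt; rewrite (nth_map set0) //; exact: (Fe_ok _ partP).2.
- move=> Hc Fs ind.
  have := nwt (ed := fun i : 'I_(size (induced_multigraph Fs)) => nth set0 (induced_multigraph Fs) i) (k := tau) (M2 ind).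
  case => [P partP|T [H dT]].
    rewrite /= (sumM Fs (fun f => rparts f P - 1)); apply: leq_trans (Hc P partP) _.
    apply: (sum_pair (a0 := set0) (b0 := set0)); first by case: ind.
    move=> i lt; case: ind => _ H; exact: crossB partP (H i lt).
  exists T; split; last exact: dT.
  by move=> j; have [c f] := H j; split; [exact: c | exact: f].
Qed.
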